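(* Let $\Pi$ be the set of graphs $G$ satisfying $\sum_{H:|V(H)|=4} w_H\cdot p(H,G)\le \frac{5}{16}$, where the weights are $w_{K_4}=1$, $w_{\bar{K_4}}=\frac12$, $w_{D_4}=\frac{5}{12}$, $w_{\bar{D_4}}=\frac{5}{12}$, $w_{P_3}=\frac13$, $w_{\bar{P_3}}=\frac16$, $w_{C_4}=\frac12$, $w_{\bar{C_4}}=\frac13$, $w_{K_{1,3}}=\frac14$, $w_{\bar{K_{1,3}}}=\frac14$, $w_{P_4}=\frac14$. Then $\Pi=\{G:\phi(G)\le 0\}$, where $\phi(G)=2\,t_{\mathrm{inj}}(C_4,G)-t_{\mathrm{inj}}(K_2,G)+\frac38$.
   Context: $K_4$ is the complete graph on 4 vertices, $D_4$ is $K_4$ minus an edge, $P_3$ is the 4-vertex graph consisting of a path on 3 vertices plus an isolated vertex, $C_4$ the 4-cycle, $P_4$ the path on 4 vertices, $K_{1,3}$ the star on 4 vertices, $K_2$ a single edge, and $\bar H$ the complement of $H$. $p(H,G)$ is the fraction of induced subgraphs of $G$ on $|V(H)|$ vertices isomorphic to $H$. For graphs $H$ on $h$ vertices and $G$ on $n$ vertices, $t_{\mathrm{inj}}(H,G)$ is the number of injective maps $\varphi:V(H)\to V(G)$ such that $uv\in E(H)$ implies $\varphi(u)\varphi(v)\in E(G)$, divided by $n(n-1)\cdots(n-h+1)$. *)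

(* Defs.v *)
(* Finite simple graphs G = (T, e) with e symmetric and
   irreflexive; small pattern graphs H on vertex set 'I_h. Densities in rat. *)
From HB Require Import structures.
From mathcomp Require Import all_boot all_order all_algebra.
Set Implicit Arguments. Unset Strict Implicit. Unset Printing Implicit Defensive.
Import Order.TTheory GRing.Theory Num.Theory.
Local Open Scope ring_scope.

Definition mkG (h : nat) (s : seq (nat * nat)) : rel 'I_h :=
  fun i j => (i != j) &&
    ((((i : nat), (j : nat)) \in s) || (((j : nat), (i : nat)) \in s)).

Definition complG (h : nat) (H : rel 'I_h) : rel 'I_h :=
  fun i j => (i != j) && ~~ H i j.

Definition K4  : rel 'I_4 := mkG [:: (0,1); (0,2); (0,3); (1,2); (1,3); (2,3)]%N.
Definition D4  : rel 'I_4 := mkG [:: (0,1); (0,2); (0,3); (1,2); (1,3)]%N.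
Definition P3  : rel 'I_4 := mkG [:: (0,1); (1,2)]%N.  (* path on 3 vertices + isolated vertex *)
Definition C4  : rel 'I_4 := mkG [:: (0,1); (1,2); (2,3); (3,0)]%N.
Definition P4  : rel 'I_4 := mkG [:: (0,1); (1,2); (2,3)]%N.
Definition K13 : rel 'I_4 := mkG [:: (0,1); (0,2); (0,3)]%N.
Definition K2  : rel 'I_2 := mkG [:: (0,1)]%N.

Definition induced_iso (T : finType) (e : rel T) (h : nat) (H : rel 'I_h)
    (S : {set T}) : bool :=
  [exists f : {ffun 'I_h -> T},
     [&& injectiveb f, f @: setT == S &
         [forall i, forall j, H i j == e (f i) (f j)]]].

Definition p_ind (T : finType) (e : rel T) (h : nat) (H : rel 'I_h) : rat :=
  (#|[set S : {set T} | (#|S| == h) && induced_iso e H S]|)%:R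
    / ('C(#|T|, h))%:R.

Definition t_inj (T : finType) (e : rel T) (h : nat) (H : rel 'I_h) : rat :=
  (#|[set f : {ffun 'I_h -> T} | injectiveb f &&
       [forall u, forall v, H u v ==> e (f u) (f v)]]|)%:R
    / ((#|T| ^_ h)%N)%:R.

Definition wsum (T : finType) (e : rel T) : rat :=
    1 * p_ind e K4 + (1/2) * p_ind e (complG K4)
  + (5/12) * p_ind e D4 + (5/12) * p_ind e (complG D4)
  + (1/3) * p_ind e P3 + (1/6) * p_ind e (complG P3)
  + (1/2) * p_ind e C4 + (1/3) * p_ind e (complG C4)
  + (1/4) * p_ind e K13 + (1/4) * p_ind e (complG K13)
  + (1/4) * p_ind e P4.

Definition phi (T : finType) (e : rel T) : rat :=
  2 * t_inj e C4 - t_inj e K2 + 3/8.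

(* Main.v *)
Require Import Defs.
From HB Require Import structures.
From mathcomp Require Import all_boot all_order all_algebra.
Import Order.TTheory GRing.Theory Num.Theory.
Local Open Scope ring_scope.
From Stdlib Require Import FunctionalExtensionality.
Set Implicit Arguments. Unset Strict Implicit. Unset Printing Implicit Defensive.

Definition o0 : 'I_4 := @Ordinal 4 0 isT.
Definition o1 : 'I_4 := @Ordinal 4 1 isT.
Definition o2 : 'I_4 := @Ordinal 4 2 isT.
Definition o3 : 'I_4 := @Ordinal 4 3 isT.

Lemma ord4_cases (i : 'I_4) : [\/ i = o0, i = o1, i = o2 | i = o3].
Proof.
case: i => [[|[|[|[|i]]]] Hi]; first (by apply: Or41; apply: val_inj);
  first (by apply: Or42; apply: val_inj); first (by apply: Or43; apply: val_inj);
  first (by apply: Or44; apply: val_inj).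
by [].
Qed.

Definition mk4 (U : Type) (a b c d : U) : {ffun 'I_4 -> U} :=
  [ffun i : 'I_4 => nth a [:: a; b; c; d] i].

Lemma mk4E (U : Type) (s : {ffun 'I_4 -> U}) : s = mk4 (s o0) (s o1) (s o2) (s o3).
Proof.
apply/ffunP => i; rewrite ffunE.
by case: (ord4_cases i) => ->.
Qed.

Lemma mk4_inj (U : Type) a b c d a' b' c' d' :
  @mk4 U a b c d = mk4 a' b' c' d' -> [/\ a = a', b = b', c = c' & d = d'].
Proof.
move=> E; have F i : mk4 a b c d i = mk4 a' b' c' d' i by rewrite E.
move: (F o0) (F o1) (F o2) (F o3); rewrite !ffunE /=.
by [].
Qed.

Lemma sum4 (U : finType) (F : {ffun 'I_4 -> U} -> nat) :
  (\sum_f F f = \sum_a \sum_b \sum_c \sum_d F (mk4 a b c d))%N.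
Proof.
rewrite (reindex (fun x : U * U * U * U => mk4 x.1.1.1 x.1.1.2 x.1.2 x.2)) /=; last first.
  exists (fun s : {ffun 'I_4 -> U} => (s o0, s o1, s o2, s o3)) => [[[[a b] c] d] _ | s _] /=.
    by rewrite !ffunE.
  by rewrite -mk4E.
by rewrite pair_bigA pair_bigA pair_bigA.
Qed.

Lemma exists4 (U : finType) (P : pred {ffun 'I_4 -> U}) :
  [exists f, P f] = [exists a, exists b, exists c, exists d, P (mk4 a b c d)].
Proof.
apply/existsP/existsP => [[f Pf] | [a /existsP [b /existsP [c /existsP [d P4]]]]].
  exists (f o0); apply/existsP; exists (f o1); apply/existsP; exists (f o2);
  apply/existsP; exists (f o3); by rewrite -mk4E.
by exists (mk4 a b c d).
Qed.

Lemma inj4 (U : finType) (a b c d : U) : injectiveb (mk4 a b c d) =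
  [&& a != b, a != c, a != d, b != c, b != d & c != d].
Proof.
apply/injectiveP/idP => [H | /andP[ab /andP[ac /andP[ad /andP[bc /andP[bd cd]]]]] i j].
  have D i j : i != j -> mk4 a b c d i != mk4 a b c d j.
    by move=> ij; apply/negP => /eqP /H /eqP; rewrite (negbTE ij).
  move: (D o0 o1 isT) (D o0 o2 isT) (D o0 o3 isT) (D o1 o2 isT) (D o1 o3 isT) (D o2 o3 isT).
  by rewrite !ffunE /= => -> -> -> -> -> ->.
rewrite !ffunE.
move/negbTE: ab => ab; move/negbTE: ac => ac; move/negbTE: ad => ad; move/negbTE: bc => bc; move/negbTE: bd => bd; move/negbTE: cd => cd.
by case: (ord4_cases i) => ->; case: (ord4_cases j) => -> //= /eqP;
  rewrite ?ab ?ac ?ad ?bc ?bd ?cd // eq_sym ?ab ?ac ?ad ?bc ?bd ?cd.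
Qed.

Definition iso (c H : rel 'I_4) : bool :=
  [exists s : {ffun 'I_4 -> 'I_4}, injectiveb s && [forall i, forall j, H i j == c (s i) (s j)]].
Definition mkc (b01 b02 b03 b12 b13 b23 : bool) : rel 'I_4 :=
  fun i j => match nat_of_ord i, nat_of_ord j with
  | 0, 1 | 1, 0 => b01 | 0, 2 | 2, 0 => b02 | 0, 3 | 3, 0 => b03
  | 1, 2 | 2, 1 => b12 | 1, 3 | 3, 1 => b13 | 2, 3 | 3, 2 => b23
  | _, _ => false end%N.

Definition dist4 (a b c d : 'I_4) : bool := [&& a != b, a != c, a != d, b != c, b != d & c != d].
Definition ap4 (a b c d : 'I_4) (i : 'I_4) : 'I_4 := nth a [:: a; b; c; d] i.
Definition ords : seq 'I_4 := [:: o0; o1; o2; o3].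
Definition sumo (F : 'I_4 -> nat) : nat := (F o0 + F o1 + F o2 + F o3)%N.
Definition cnt3 (X : rel 'I_4 -> bool) (c : rel 'I_4) : nat :=
  sumo (fun a => sumo (fun b => sumo (fun c' => sumo (fun d => (dist4 a b c' d &&
     X (fun i j => c (ap4 a b c' d i) (ap4 a b c' d j))) : nat)))).
Definition isoc3 (c H : rel 'I_4) : bool :=
  has (fun a => has (fun b => has (fun c' => has (fun d => dist4 a b c' d &&
     all (fun i => all (fun j => H i j == c (ap4 a b c' d i) (ap4 a b c' d j)) ords) ords)
     ords) ords) ords) ords.
Definition C4b3 (c : rel 'I_4) : bool := all (fun u => all (fun v => C4 u v ==> c u v) ords) ords.
Definition K2b (c : rel 'I_4) : bool := c o0 o1.
Definition wnat (c : rel 'I_4) : nat :=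
  (48 * isoc3 c K4 + 24 * isoc3 c (complG K4) + 20 * isoc3 c D4 + 20 * isoc3 c (complG D4)
   + 16 * isoc3 c P3 + 8 * isoc3 c (complG P3) + 24 * isoc3 c C4 + 16 * isoc3 c (complG C4)
   + 12 * isoc3 c K13 + 12 * isoc3 c (complG K13) + 12 * isoc3 c P4)%N.
Lemma natcheck b01 b02 b03 b12 b13 b23 :
  let c := mkc b01 b02 b03 b12 b13 b23 in
  (wnat c + cnt3 K2b c == 24 + 2 * cnt3 C4b3 c)%N.
Proof.
by case: b01; case: b02; case: b03; case: b12; case: b13; case: b23; vm_compute.
Qed.

Lemma mem_ords (i : 'I_4) : i \in ords.
Proof. by case: (ord4_cases i) => ->; rewrite !inE eqxx ?orbT. Qed.

Lemma ap4E (s : {ffun 'I_4 -> 'I_4}) i : ap4 (s o0) (s o1) (s o2) (s o3) i = s i.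
Proof. by rewrite [in RHS](mk4E s) ffunE. Qed.

Lemma iso_isoc3 c H : iso c H = isoc3 c H.
Proof.
apply/idP/idP.
  case/existsP => s /andP [injs /forallP Hs].
  apply/hasP; exists (s o0); first exact: mem_ords.
  apply/hasP; exists (s o1); first exact: mem_ords.
  apply/hasP; exists (s o2); first exact: mem_ords.
  apply/hasP; exists (s o3); first exact: mem_ords.
  apply/andP; split; first by rewrite /dist4 -inj4 -mk4E.
  apply/allP => i _; apply/allP => j _; rewrite !ap4E.
  by move/forallP: (Hs i) => /(_ j).
case/hasP => a _ /hasP [b _ /hasP [c' _ /hasP [d _ /andP [Hd /allP Ha]]]].
apply/existsP; exists (mk4 a b c' d); apply/andP; split; first by rewrite inj4.
apply/forallP => i; apply/forallP => j; rewrite !ffunE.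
by move: (Ha i (mem_ords i)) => /allP /(_ j (mem_ords j)).
Qed.

Definition cntS (X : rel 'I_4 -> bool) (c : rel 'I_4) : nat :=
  (\sum_(s : {ffun 'I_4 -> 'I_4}) (injectiveb s && X (fun i j => c (s i) (s j))))%N.

Lemma sumI4' (F F' : 'I_4 -> nat) : (forall a, F a = F' a) -> (\sum_a F a)%N = sumo F'.
Proof.
move=> E; rewrite /sumo -!E (bigD1 o0) // (bigD1 o1) // (bigD1 o2) // (bigD1 o3) //=.
rewrite big1 ?addn0 ?addnA // => i.
by case: (ord4_cases i) => ->; rewrite ?eqxx ?andbF.
Qed.

Lemma cntS_cnt3 X c : cntS X c = cnt3 X c.
Proof.
rewrite /cntS sum4; apply: sumI4' => a; apply: sumI4' => b; apply: sumI4' => c'.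
apply: sumI4' => d; rewrite inj4; congr (nat_of_bool (_ && X _)).
by apply: functional_extensionality => i; apply: functional_extensionality => j; rewrite !ffunE.
Qed.

Lemma forall4 (P : pred 'I_4) : [forall u, P u] = all P ords.
Proof.
apply/forallP/allP => H u; first by move=> _; exact: H.
exact: H (mem_ords u).
Qed.

Definition C4b (c : rel 'I_4) : bool := [forall u, forall v, C4 u v ==> c u v].

Lemma C4bE : C4b = C4b3.
Proof.
apply: functional_extensionality => c; rewrite /C4b forall4; apply: eq_all => u.
by rewrite forall4.
Qed.

Lemma mkcE (c : rel 'I_4) : (forall i j, c i j = c j i) -> (forall i, c i i = false) ->
  c = mkc (c o0 o1) (c o0 o2) (c o0 o3) (c o1 o2) (c o1 o3) (c o2 o3).
Proof.
move=> cs ci; apply: functional_extensionality => i; apply: functional_extensionality => j.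
by case: (ord4_cases i) => ->; case: (ord4_cases j) => ->; rewrite /mkc /= ?ci // cs.
Qed.

Definition wnatS (c : rel 'I_4) : nat :=
  (48 * iso c K4 + 24 * iso c (complG K4) + 20 * iso c D4 + 20 * iso c (complG D4)
   + 16 * iso c P3 + 8 * iso c (complG P3) + 24 * iso c C4 + 16 * iso c (complG C4)
   + 12 * iso c K13 + 12 * iso c (complG K13) + 12 * iso c P4)%N.

Lemma percode (c : rel 'I_4) : (forall i j, c i j = c j i) -> (forall i, c i i = false) ->
  (wnatS c + cntS K2b c = 24 + 2 * cntS C4b c)%N.
Proof.
move=> cs ci.
have -> : wnatS c = wnat c by rewrite /wnatS /wnat !iso_isoc3.
rewrite !cntS_cnt3 C4bE (mkcE cs ci); apply/eqP; exact: natcheck.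
Qed.

Local Close Scope ring_scope.

Definition code (T : finType) (e : rel T) (f : {ffun 'I_4 -> T}) : rel 'I_4 :=
  fun i j => e (f i) (f j).

Lemma cardAB (U : finType) (A B : pred U) :
  #|[set x | A x && B x]| = (\sum_(x | A x) B x)%N.
Proof.
rewrite -sum1dep_card big_mkcond [RHS]big_mkcond /=; apply: eq_bigr => x _.
by case: (A x); case: (B x).
Qed.

Lemma sum_andb (U : finType) (P Q : pred U) :
  (\sum_x (P x && Q x : nat) = \sum_(x | P x) (Q x : nat))%N.
Proof. by rewrite [RHS]big_mkcond; apply: eq_bigr => x _; case: (P x). Qed.

Lemma surj_of_inj (s : {ffun 'I_4 -> 'I_4}) : injective s -> forall x, exists y, s y = x.
Proof.
move=> injs; have [s' sK s'K] := injF_bij injs.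
by move=> x; exists (s' x); rewrite s'K.
Qed.

Lemma symm (T : finType) (e : rel T) (X : rel 'I_4 -> bool) :
  (24 * \sum_(f : {ffun 'I_4 -> T} | injectiveb f) X (code e f) =
   \sum_(f : {ffun 'I_4 -> T} | injectiveb f) cntS X (code e f))%N.
Proof.
rewrite /cntS.
under [RHS]eq_bigr do rewrite sum_andb.
rewrite exchange_big /=.
have E : forall s : {ffun 'I_4 -> 'I_4}, injectiveb s ->
   (\sum_(f : {ffun 'I_4 -> T} | injectiveb f) X (fun i j => code e f (s i) (s j)) =
    \sum_(f : {ffun 'I_4 -> T} | injectiveb f) X (code e f))%N.
  move=> s /injectiveP injs.
  pose h (f : {ffun 'I_4 -> T}) := [ffun i => f (s i)].
  have hinj : injective h.
    move=> f g /ffunP hfg; apply/ffunP => x.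
    have [y <-] := surj_of_inj injs x.
    by have := hfg y; rewrite /h !ffunE.
  rewrite [RHS](reindex_inj hinj) /=; apply: eq_big => f; rewrite /h.
    apply/injectiveP/injectiveP => [fi x y | hi x y].
      by rewrite !ffunE => /fi /injs.
    have [x' ex] := surj_of_inj injs x; have [y' ey] := surj_of_inj injs y.
    rewrite -ex -ey => fxy; congr (s _); apply: hi; by rewrite !ffunE.
  move=> _; congr (X _); apply: functional_extensionality => i.
  by apply: functional_extensionality => j; rewrite /code !ffunE.
rewrite (eq_bigr _ E) sum_nat_const; congr (_ * _).
have C : #|[set s : {ffun 'I_4 -> 'I_4} | injectiveb s]| = 24 by rewrite card_inj_ffuns !card_ord.
by rewrite -C; apply: eq_card => s; rewrite inE.
Qed.

Lemma card_img4 (T : finType) (f : {ffun 'I_4 -> T}) : injectiveb f -> #|f @: setT| = 4.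
Proof. by move/injectiveP => fi; rewrite card_imset // cardsT card_ord. Qed.

Lemma iso_induced (T : finType) (e : rel T) (H : rel 'I_4) (f : {ffun 'I_4 -> T}) :
  injectiveb f -> iso (code e f) H = induced_iso e H (f @: setT).
Proof.
move=> finj; apply/idP/idP.
  case/existsP => s /andP [/injectiveP sinj /forallP Hs].
  apply/existsP; exists [ffun i => f (s i)].
  have ginj : injectiveb [ffun i => f (s i)].
    apply/injectiveP => x y; rewrite !ffunE => /(injectiveP _ finj); exact: sinj.
  rewrite ginj /=; apply/andP; split.
    rewrite eqEcard card_img4 // card_img4 // leqnn andbT.
    by apply/subsetP => _ /imsetP [x _ ->]; rewrite ffunE imset_f.
  apply/forallP => i; apply/forallP => j; rewrite !ffunE.
  by move/forallP: (Hs i) => /(_ j).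
case/existsP => g /and3P [/injectiveP ginj /eqP gim /forallP Hg].
have ex i : exists k, f k == g i.
  have : g i \in f @: setT by rewrite -gim imset_f.
  by case/imsetP => k _ ->; exists k.
pose s := [ffun i => odflt i [pick k | f k == g i]].
have fs i : f (s i) = g i.
  rewrite /s ffunE; case: pickP => [k /eqP //|none].
  by case: (ex i) => k; rewrite none.
apply/existsP; exists s; apply/andP; split.
  apply/injectiveP => x y sxy; apply: ginj; by rewrite -!fs sxy.
apply/forallP => i; apply/forallP => j; rewrite /code !fs.
by move/forallP: (Hg i) => /(_ j).
Qed.

Lemma sum_cond1 (U : finType) (P Q : pred U) :
  (\sum_(x | P x) (Q x : nat) = \sum_(x | P x && Q x) 1)%N.
Proof. by rewrite big_mkcondr; apply: eq_bigr => x _; case: (Q x). Qed.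

Lemma pcount (T : finType) (e : rel T) (H : rel 'I_4) :
  (#|[set S : {set T} | (#|S| == 4) && induced_iso e H S]| * 24 =
   \sum_(f : {ffun 'I_4 -> T} | injectiveb f) iso (code e f) H)%N.
Proof.
rewrite sum_cond1 (partition_big (fun f : {ffun 'I_4 -> T} => f @: setT)
   (fun S => (#|S| == 4) && induced_iso e H S)) /=; last first.
  by move=> f /andP [fi fiso]; rewrite card_img4 // -iso_induced.
rewrite -sum1dep_card big_distrl /=; apply: eq_bigr => S /andP [/eqP cS indS].
rewrite mul1n sum1dep_card.
have <- : #|[set f : {ffun 'I_4 -> T} in ffun_on (mem S) | injectiveb f]| = 24.
  by rewrite card_inj_ffuns_on cS card_ord.
apply: eq_card => f; rewrite !inE.
case finj: (injectiveb f); last by rewrite andbF.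
rewrite andbT /= iso_induced //.
apply/idP/andP => [/forallP fon | [_ /eqP im]]; last first.
  by apply/forallP => x; rewrite -im imset_f.
have im : f @: setT == S.
  rewrite eqEcard card_img4 // cS leqnn andbT.
  by apply/subsetP => _ /imsetP [x _ ->]; exact: fon.
by rewrite (eqP im) indS.
Qed.

Definition q0 : 'I_2 := @Ordinal 2 0 isT.
Definition q1 : 'I_2 := @Ordinal 2 1 isT.

Lemma ord2_cases (i : 'I_2) : i = q0 \/ i = q1.
Proof.
case: i => [[|[|i]] Hi]; first (by left; apply: val_inj); first (by right; apply: val_inj).
by [].
Qed.

Definition mk2 (U : Type) (a b : U) : {ffun 'I_2 -> U} := [ffun i : 'I_2 => nth a [:: a; b] i].

Lemma mk2E (U : Type) (s : {ffun 'I_2 -> U}) : s = mk2 (s q0) (s q1).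
Proof. by apply/ffunP => i; rewrite ffunE; case: (ord2_cases i) => ->. Qed.

Lemma sum2 (U : finType) (F : {ffun 'I_2 -> U} -> nat) :
  (\sum_f F f = \sum_a \sum_b F (mk2 a b))%N.
Proof.
rewrite (reindex (fun x : U * U => mk2 x.1 x.2)) /=; last first.
  exists (fun s : {ffun 'I_2 -> U} => (s q0, s q1)) => [[a b] _ | s _] /=.
    by rewrite !ffunE.
  by rewrite -mk2E.
by rewrite pair_bigA.
Qed.

Lemma inj2 (U : finType) (a b : U) : injectiveb (mk2 a b) = (a != b).
Proof.
apply/injectiveP/idP => [H | ab i j].
  by apply/negP => /eqP E; have := H q0 q1; rewrite !ffunE /= E => /(_ erefl).
rewrite !ffunE; case: (ord2_cases i) => ->; case: (ord2_cases j) => -> //= E;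
  by move: ab; rewrite E eqxx.
Qed.

Lemma K2hom (T : finType) (e : rel T) (e_sym : symmetric e) (a b : T) :
  [forall u, forall v, K2 u v ==> e (mk2 a b u) (mk2 a b v)] = e a b.
Proof.
apply/forallP/idP => [H | eab u].
  by move/forallP: (H q0) => /(_ q1); rewrite !ffunE.
apply/forallP => v; rewrite !ffunE.
by case: (ord2_cases u) => ->; case: (ord2_cases v) => -> //=; rewrite e_sym.
Qed.

Lemma sum_notin (T : finType) (A : {set T}) : (\sum_d (d \notin A : nat) = #|T| - #|A|)%N.
Proof.
rewrite -[LHS]big_mkcond /= sum1dep_card -(cardsC A) addKn.
by apply: eq_card => d; rewrite !inE.
Qed.

Lemma ext_count (T : finType) (a b : T) : a != b ->
  (\sum_c \sum_d ([&& c != a, c != b, d != a, d != b & c != d] : nat) =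
   (#|T| - 2) * (#|T| - 3))%N.
Proof.
move=> ab.
transitivity (\sum_c (c \notin [set a; b] : nat) * (#|T| - 3))%N; last first.
  by rewrite -big_distrl /= sum_notin cards2 ab.
apply: eq_bigr => c _.
case cab: (c \notin [set a; b]); last first.
  rewrite mul0n big1 // => d _.
  by move: cab; rewrite !inE negb_or; case: (c != a); case: (c != b).
rewrite mul1n.
have c3 : #|c |: [set a; b]| = 3.
  rewrite cardsU1 cards2 ab.
  by rewrite cab.
rewrite -c3 -sum_notin; apply: eq_bigr => d _.
move: cab; rewrite !inE !negb_or => /andP [-> ->] /=.
by rewrite [c == d]eq_sym; case: (d != a); case: (d != b); case: (d != c).
Qed.

Lemma k2count (T : finType) (e : rel T) (e_sym : symmetric e) :
  (#|[set g : {ffun 'I_2 -> T} | injectiveb g &&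
        [forall u, forall v, K2 u v ==> e (g u) (g v)]]| * ((#|T| - 2) * (#|T| - 3)) =
   \sum_(f : {ffun 'I_4 -> T} | injectiveb f) K2b (code e f))%N.
Proof.
rewrite cardAB -(sum_andb (fun g : {ffun 'I_2 -> T} => injectiveb g)) -(sum_andb (fun g : {ffun 'I_4 -> T} => injectiveb g)) sum2 sum4 big_distrl /=.
apply: eq_bigr => a _; rewrite big_distrl; apply: eq_bigr => b _ /=.
rewrite inj2 K2hom //.
under eq_bigr => c _ do under eq_bigr => d _ do rewrite inj4 /K2b /code !ffunE /=.
case ab: (a != b); case eab: (e a b); rewrite /= ?mul0n ?mul1n; first last.
- by rewrite big1 // => c _; rewrite big1 // => d _; rewrite ?ab ?eab ?andbF.
- by rewrite big1 // => c _; rewrite big1 // => d _; rewrite ?ab ?eab ?andbF.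
- by rewrite big1 // => c _; rewrite big1 // => d _; rewrite ?ab ?eab ?andbF.
rewrite -(ext_count ab); apply: eq_bigr => c _; apply: eq_bigr => d _.
rewrite andbT [b == c]eq_sym [a == c]eq_sym [a == d]eq_sym [b == d]eq_sym.
by case: (c != a); case: (c != b); case: (d != a); case: (d != b); case: (c != d).
Qed.

From mathcomp Require Import ring lra zify.
Local Open Scope ring_scope.

Definition SH (T : finType) (e : rel T) (H : rel 'I_4) : nat :=
  (\sum_(f : {ffun 'I_4 -> T} | injectiveb f) iso (code e f) H)%N.
Definition SX (T : finType) (e : rel T) (X : rel 'I_4 -> bool) : nat :=
  (\sum_(f : {ffun 'I_4 -> T} | injectiveb f) X (code e f))%N.

Lemma ffact4 (n : nat) : (4 <= n)%N ->
  [/\ (n ^_ 4 = 'C(n, 4) * 24)%N, (n ^_ 4 = n ^_ 2 * ((n - 2) * (n - 3)))%N & (0 < n ^_ 4)%N].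
Proof.
move=> hn; split.
- by rewrite -bin_ffact.
- case: n hn => [|[|[|[|m]]]] // _.
  rewrite !ffactnS !ffactn0 /= !subSS !subn0; lia.
- by rewrite ffact_gt0.
Qed.

Lemma p_indE (T : finType) (e : rel T) (H : rel 'I_4) : (4 <= #|T|)%N ->
  p_ind e H = (SH e H)%:R / (#|T| ^_ 4)%:R.
Proof.
move=> hn; have [h1 _ h3] := ffact4 hn.
rewrite /p_ind /SH -pcount h1 natrM.
have C0 : ('C(#|T|, 4))%:R != 0 :> rat by rewrite pnatr_eq0 -lt0n bin_gt0.
by field.
Qed.

Lemma tC4E (T : finType) (e : rel T) : t_inj e C4 = (SX e C4b)%:R / (#|T| ^_ 4)%:R.
Proof. by rewrite /t_inj cardAB. Qed.

Lemma tK2E (T : finType) (e : rel T) (e_sym : symmetric e) : (4 <= #|T|)%N ->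
  t_inj e K2 = (SX e K2b)%:R / (#|T| ^_ 4)%:R.
Proof.
move=> hn; have [_ h2 h3] := ffact4 hn.
rewrite /t_inj /SX -k2count // h2 !(natrM _ _ ((#|T| - 2) * (#|T| - 3))).
have K0 : ((#|T| - 2) * (#|T| - 3))%:R != 0 :> rat.
  rewrite pnatr_eq0 muln_eq0 negb_or !subn_eq0 -!ltnNge.
  by apply/andP; split; lia.
have N0 : (#|T| ^_ 2)%:R != 0 :> rat by rewrite pnatr_eq0 -lt0n ffact_gt0; lia.
by rewrite -mulf_div divff // mulr1.
Qed.

Lemma sum_wnatS (T : finType) (e : rel T) :
  (\sum_(f : {ffun 'I_4 -> T} | injectiveb f) wnatS (code e f) =
   48 * SH e K4 + 24 * SH e (complG K4) + 20 * SH e D4 + 20 * SH e (complG D4)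
   + 16 * SH e P3 + 8 * SH e (complG P3) + 24 * SH e C4 + 16 * SH e (complG C4)
   + 12 * SH e K13 + 12 * SH e (complG K13) + 12 * SH e P4)%N.
Proof.
rewrite /SH !big_distrr -!big_split.
by apply: eq_bigr => f _.
Qed.

Lemma splitN (U : finType) (P : pred U) (F G : U -> nat) :
  (\sum_(x | P x) (F x + G x) = \sum_(x | P x) F x + \sum_(x | P x) G x)%N.
Proof. exact: big_split. Qed.

Lemma distrN (U : finType) (P : pred U) (k : nat) (F : U -> nat) :
  (\sum_(x | P x) (k * F x) = k * \sum_(x | P x) F x)%N.
Proof. by rewrite big_distrr. Qed.

Lemma main_eq (T : finType) (e : rel T) (e_sym : symmetric e) (e_irr : irreflexive e) :
  (48 * SH e K4 + 24 * SH e (complG K4) + 20 * SH e D4 + 20 * SH e (complG D4)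
   + 16 * SH e P3 + 8 * SH e (complG P3) + 24 * SH e C4 + 16 * SH e (complG C4)
   + 12 * SH e K13 + 12 * SH e (complG K13) + 12 * SH e P4 + 24 * SX e K2b
   = 24 * #|T| ^_ 4 + 48 * SX e C4b)%N.
Proof.
have P : (\sum_(f : {ffun 'I_4 -> T} | injectiveb f) (wnatS (code e f) + cntS K2b (code e f))
   = \sum_(f : {ffun 'I_4 -> T} | injectiveb f) (24 + 2 * cntS C4b (code e f)))%N.
  apply: eq_bigr => f _; apply: percode => [i j | i]; rewrite /code.
    exact: e_sym.
  exact: e_irr.
rewrite (splitN _ (fun f => wnatS (code e f)) (fun f => cntS K2b (code e f))) in P.
rewrite (splitN _ (fun _ => 24%N) (fun f => 2 * cntS C4b (code e f)))%N in P.
rewrite (distrN _ 2 (fun f => cntS C4b (code e f))) -!symm in P.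
have C : (\sum_(f : {ffun 'I_4 -> T} | injectiveb f) 24 = 24 * #|T| ^_ 4)%N.
  rewrite (eq_bigl (fun f => f \in [set f : {ffun 'I_4 -> T} | injectiveb f])); last first.
    by move=> f; rewrite inE.
  by rewrite sum_nat_const card_inj_ffuns card_ord mulnC.
rewrite C sum_wnatS in P.
rewrite /SX; lia.
Qed.

Lemma alg_id (a1 a2 a3 a4 a5 a6 a7 a8 a9 a10 a11 k c n : nat) : (n%:R : rat) != 0 ->
  (1 : rat) * (a1%:R / n%:R) + 1 / 2 * (a2%:R / n%:R) + 5 / 12 * (a3%:R / n%:R) +
  5 / 12 * (a4%:R / n%:R) + 1 / 3 * (a5%:R / n%:R) + 1 / 6 * (a6%:R / n%:R) +
  1 / 2 * (a7%:R / n%:R) + 1 / 3 * (a8%:R / n%:R) + 1 / 4 * (a9%:R / n%:R) +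
  1 / 4 * (a10%:R / n%:R) + 1 / 4 * (a11%:R / n%:R) - 5 / 16 -
  (2 * (c%:R / n%:R) - k%:R / n%:R + 3 / 8) / 2 =
  ((48 * a1 + 24 * a2 + 20 * a3 + 20 * a4 + 16 * a5 + 8 * a6 + 24 * a7 + 16 * a8
    + 12 * a9 + 12 * a10 + 12 * a11 + 24 * k)%N%:R - (24 * n + 48 * c)%N%:R) / (48 * n%:R).
Proof. move=> n0; by field. Qed.

Lemma key_equiv (x y : rat) : x - 5/16 = y / 2 -> (x <= 5/16 <-> y <= 0).
Proof. move=> h; split => H; lra. Qed.

Unset Implicit Arguments.
Theorem lemma2p1 (T : finType) (e : rel T)
    (e_sym : symmetric e) (e_irr : irreflexive e) (hn : (4 <= #|T|)%N) :
  (wsum e <= 5/16) <-> (phi e <= 0).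
Proof.
have hN : (0 < #|T| ^_ 4)%N by rewrite ffact_gt0.
have N0 : (#|T| ^_ 4)%:R != 0 :> rat by rewrite pnatr_eq0 -lt0n.
have E := main_eq e_sym e_irr.
apply: key_equiv.
rewrite /wsum /phi !p_indE // tC4E tK2E //.
apply/eqP; rewrite -subr_eq0.
rewrite alg_id //.
by rewrite E subrr mul0r.
Qed.
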